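(* Let $\alpha\in(0,\tfrac12)$ and $0<X_B\le X_A$. If player $B$ pre-commits any $p\in[0,X_B]$ to battlefield $b=2$, then $$u_B(p)<\min\{\pi_B(\sigma):\sigma\in(0,\infty),\ S(\sigma)=0\}.$$
   Context: Two-battlefield asymmetric setting $\mathrm{GGL}(X_A,X_B,\alpha)$: valuations $v_{A,1}=\alpha$, $v_{A,2}=1-\alpha$, $v_{B,1}=1-\alpha$, $v_{B,2}=\alpha$, budgets $X_A,X_B>0$. Define, for $x,y\ge0$, $L(x,y)=\frac{x}{2y}$ if $0\le x\le y$, $y>0$; $L(x,y)=1-\frac{y}{2x}$ if $x>y\ge0$; $L(0,0)=\tfrac12$. Let $c=\frac{(1-\alpha)^2}{\alpha}+\frac{\alpha^2}{1-\alpha}$, $r=X_A/X_B$, and $S:(0,\infty)\to\mathbb R$: $S(\sigma)=\sigma^2(c\sigma-r)$ on $(0,\frac{\alpha}{1-\alpha})$; $S(\sigma)=\frac{\alpha^2}{1-\alpha}(\sigma^3-r)+\alpha\sigma(1-r\sigma)$ on $[\frac{\alpha}{1-\alpha},\frac{1-\alpha}{\alpha})$; $S(\sigma)=\sigma-rc$ on $[\frac{1-\alpha}{\alpha},\infty)$. The equilibrium payoff of $B$ associated with a zero $\sigma$ of $S$ is $\pi_B(\sigma)=1-\frac{\sigma}{2}$ if $\sigma\in(0,\frac{\alpha}{1-\alpha})$; $\pi_B(\sigma)=1-\alpha-\frac{\alpha\sigma}{2}+\frac{\alpha^2}{2\sigma(1-\alpha)}$ if $\sigma\in[\frac{\alpha}{1-\alpha},\frac{1-\alpha}{\alpha})$;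 $\pi_B(\sigma)=\frac{c}{2\sigma}$ if $\sigma\ge\frac{1-\alpha}{\alpha}$. Pre-commitment: $B$ places $p\in[0,X_B]$ on one battlefield $b\in\{1,2\}$. Then $u_A^{M}(p)=v_{A,b}+(1-v_{A,b})L(X_A-p,X_B-p)$ (for $p\le X_A$) and $u_A^{W}(p)=(1-v_{A,b})L(X_A,X_B-p)$. Player $A$'s response is $\mathtt A_b(p)=\mathtt M$ if $p\le X_A$ and $u_A^M(p)>u_A^W(p)$, and $\mathtt A_b(p)=\mathtt W$ otherwise. Player $B$'s payoff is $u_B(p)=(1-v_{B,b})L(X_B-p,X_A-p)$ if $\mathtt A_b(p)=\mathtt M$, and $u_B(p)=v_{B,b}+(1-v_{B,b})L(X_B-p,X_A)$ if $\mathtt A_b(p)=\mathtt W$. *)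

(* Defs.v *)
From Stdlib Require Import Reals Lra.
Open Scope R_scope.

(* L(x,y) for x,y >= 0 (values outside that domain are irrelevant). *)
Definition L (x y : R) : R :=
  if Rle_dec x y then
    (if Rlt_dec 0 y then x / (2 * y) else 1 / 2)
  else 1 - y / (2 * x).

Definition cst (alpha : R) : R :=
  (1 - alpha) ^ 2 / alpha + alpha ^ 2 / (1 - alpha).

Definition S (alpha XA XB sigma : R) : R :=
  let r := XA / XB in
  if Rlt_dec sigma (alpha / (1 - alpha)) then
    sigma ^ 2 * (cst alpha * sigma - r)
  else if Rlt_dec sigma ((1 - alpha) / alpha) then
    alpha ^ 2 / (1 - alpha) * (sigma ^ 3 - r) + alpha * sigma * (1 - r * sigma)
  else sigma - r * cst alpha.

Definition piB (alpha sigma : R) : R :=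
  if Rlt_dec sigma (alpha / (1 - alpha)) then 1 - sigma / 2
  else if Rlt_dec sigma ((1 - alpha) / alpha) then
    1 - alpha - alpha * sigma / 2 + alpha ^ 2 / (2 * sigma * (1 - alpha))
  else cst alpha / (2 * sigma).

Inductive bf := bf1 | bf2.

Definition vA (alpha : R) (b : bf) : R :=
  match b with bf1 => alpha | bf2 => 1 - alpha end.
Definition vB (alpha : R) (b : bf) : R :=
  match b with bf1 => 1 - alpha | bf2 => alpha end.

Definition uA_M (alpha XA XB : R) (b : bf) (p : R) : R :=
  vA alpha b + (1 - vA alpha b) * L (XA - p) (XB - p).
Definition uA_W (alpha XA XB : R) (b : bf) (p : R) : R :=
  (1 - vA alpha b) * L XA (XB - p).

(* A's response: true = M (match), false = W (withdraw) *)
Definition respA_M (alpha XA XB : R) (b : bf) (p : R) : bool :=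
  if Rle_dec p XA then
    (if Rlt_dec (uA_W alpha XA XB b p) (uA_M alpha XA XB b p) then true else false)
  else false.

Definition uB (alpha XA XB : R) (b : bf) (p : R) : R :=
  if respA_M alpha XA XB b p then (1 - vB alpha b) * L (XB - p) (XA - p)
  else vB alpha b + (1 - vB alpha b) * L (XB - p) XA.

(* Main.v *)
Require Import Defs.
From Stdlib Require Import Reals Lra.
Open Scope R_scope.

Lemma cont_eps (f : R -> R) x0 : continuity_pt f x0 ->
  forall eps, 0 < eps -> exists d, 0 < d /\ forall y, Rabs (y - x0) < d -> Rabs (f y - f x0) < eps.
Proof.
  intros Hc eps He.
  destruct (Hc eps He) as [d [Hd H]].
  exists d; split; [exact Hd|].
  intros y Hy.
  destruct (Req_dec y x0) as [->|Hne].
  - rewrite Rminus_diag, Rabs_R0; exact He.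
  - apply (H y). split. split; [exact I| congruence]. exact Hy.
Qed.

Lemma glue (h f g : R -> R) x0 d0 : 0 < d0 -> continuity_pt f x0 -> continuity_pt g x0 ->
  f x0 = h x0 -> g x0 = h x0 ->
  (forall y, Rabs (y - x0) < d0 -> h y = f y \/ h y = g y) ->
  forall eps, 0 < eps -> exists d, 0 < d /\ forall y, Rabs (y - x0) < d -> Rabs (h y - h x0) < eps.
Proof.
  intros Hd0 Hf Hg Ef Eg Hh eps He.
  destruct (cont_eps f x0 Hf eps He) as [d1 [Hd1 H1]].
  destruct (cont_eps g x0 Hg eps He) as [d2 [Hd2 H2]].
  exists (Rmin d0 (Rmin d1 d2)). split.
  - apply Rmin_pos; [lra| apply Rmin_pos; lra].
  - intros y Hy.
    assert (A0 : Rabs (y - x0) < d0) by (eapply Rlt_le_trans; [exact Hy| apply Rmin_l]).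
    assert (A1 : Rabs (y - x0) < d1) by (eapply Rlt_le_trans; [exact Hy| eapply Rle_trans; [apply Rmin_r| apply Rmin_l]]).
    assert (A2 : Rabs (y - x0) < d2) by (eapply Rlt_le_trans; [exact Hy| eapply Rle_trans; [apply Rmin_r| apply Rmin_r]]).
    destruct (Hh y A0) as [E|E]; rewrite E.
    + rewrite <- Ef. apply H1; exact A1.
    + rewrite <- Eg. apply H2; exact A2.
Qed.

Section Sx.
Variables alpha XA XB : R.
Hypothesis Hal : 0 < alpha < 1/2.
Hypothesis HX : 0 < XB <= XA.

Let a := alpha / (1 - alpha).
Let bb := (1 - alpha) / alpha.
Let r := XA / XB.
Let c := cst alpha.
Let p1 y := y ^ 2 * (c * y - r).
Let p2 y := alpha ^ 2 / (1 - alpha) * (y ^ 3 - r) + alpha * y * (1 - r * y).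
Let p3 y := y - r * c.

Lemma S_eq y : S alpha XA XB y =
  if Rlt_dec y a then p1 y else if Rlt_dec y bb then p2 y else p3 y.
Proof. reflexivity. Qed.

Lemma a_facts : 0 < a /\ a < 1 /\ 1 < bb.
Proof.
  unfold a, bb. split; [|split].
  - apply Rdiv_lt_0_compat; lra.
  - apply Rmult_lt_reg_r with (1 - alpha); [lra|]. field_simplify; lra.
  - apply Rmult_lt_reg_r with alpha; [lra|]. field_simplify; lra.
Qed.

Lemma c_pos : 0 < c.
Proof.
  unfold c, cst. assert (0 < (1-alpha)^2/alpha) by (apply Rdiv_lt_0_compat; nra).
  assert (0 < alpha^2/(1-alpha)) by (apply Rdiv_lt_0_compat; nra). lra.
Qed.

Lemma r_ge1 : 1 <= r.
Proof. unfold r. apply Rmult_le_reg_r with XB; [lra|]. field_simplify; lra. Qed.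

Lemma p12 : p1 a = p2 a.
Proof. unfold p1, p2, a, c, cst. field. lra. Qed.
Lemma p23 : p2 bb = p3 bb.
Proof. unfold p3, p2, bb, c, cst. field. lra. Qed.


Lemma S_cont x0 : 0 < x0 -> forall eps, 0 < eps -> exists d, 0 < d /\
  forall y, Rabs (y - x0) < d -> Rabs (S alpha XA XB y - S alpha XA XB x0) < eps.
Proof.
  intros Hx0. destruct a_facts as [Ha [Ha1 Hb1]].
  assert (C1 : forall z, continuity_pt p1 z) by (intros; unfold p1; reg).
  assert (C2 : forall z, continuity_pt p2 z) by (intros; unfold p2; reg).
  assert (C3 : forall z, continuity_pt p3 z) by (intros; unfold p3; reg).
  destruct (Rlt_le_dec x0 a) as [H1|H1].
  - apply (glue _ p1 p1 x0 (a - x0)); auto; try lra.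
    + rewrite S_eq; destruct (Rlt_dec x0 a); [reflexivity| lra].
    + rewrite S_eq; destruct (Rlt_dec x0 a); [reflexivity| lra].
    + intros y Hy. apply Rabs_def2 in Hy. left. rewrite S_eq.
      destruct (Rlt_dec y a); [reflexivity| lra].
  - destruct (Req_dec x0 a) as [E|E].
    + subst x0. apply (glue _ p1 p2 a (bb - a)); auto; try lra.
      * rewrite S_eq; destruct (Rlt_dec a a); [lra|].
        destruct (Rlt_dec a bb); [apply p12| lra].
      * rewrite S_eq; destruct (Rlt_dec a a); [lra|].
        destruct (Rlt_dec a bb); [reflexivity| lra].
      * intros y Hy. apply Rabs_def2 in Hy. rewrite S_eq.
        destruct (Rlt_dec y a); [left; reflexivity|].
        destruct (Rlt_dec y bb); [right; reflexivity| lra].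
    + destruct (Rlt_le_dec x0 bb) as [H2|H2].
      * apply (glue _ p2 p2 x0 (Rmin (x0 - a) (bb - x0))); auto.
        -- apply Rmin_pos; lra.
        -- rewrite S_eq; destruct (Rlt_dec x0 a); [lra|].
           destruct (Rlt_dec x0 bb); [reflexivity| lra].
        -- rewrite S_eq; destruct (Rlt_dec x0 a); [lra|].
           destruct (Rlt_dec x0 bb); [reflexivity| lra].
        -- intros y Hy.
           assert (Hm1 := Rmin_l (x0 - a) (bb - x0)). assert (Hm2 := Rmin_r (x0 - a) (bb - x0)).
           apply Rabs_def2 in Hy. left. rewrite S_eq.
           destruct (Rlt_dec y a); [lra|]. destruct (Rlt_dec y bb); [reflexivity| lra].
      * destruct (Req_dec x0 bb) as [E2|E2].
        -- subst x0. apply (glue _ p2 p3 bb (bb - a)); auto; try lra.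
           ++ rewrite S_eq; destruct (Rlt_dec bb a); [lra|].
              destruct (Rlt_dec bb bb); [lra| apply p23].
           ++ rewrite S_eq; destruct (Rlt_dec bb a); [lra|].
              destruct (Rlt_dec bb bb); [lra| reflexivity].
           ++ intros y Hy. apply Rabs_def2 in Hy. rewrite S_eq.
              destruct (Rlt_dec y a); [lra|].
              destruct (Rlt_dec y bb); [left; reflexivity| right; reflexivity].
        -- apply (glue _ p3 p3 x0 (x0 - bb)); auto; try lra.
           ++ rewrite S_eq; destruct (Rlt_dec x0 a); [lra|].
              destruct (Rlt_dec x0 bb); [lra| reflexivity].
           ++ rewrite S_eq; destruct (Rlt_dec x0 a); [lra|].
              destruct (Rlt_dec x0 bb); [lra| reflexivity].
           ++ intros y Hy. apply Rabs_def2 in Hy. left. rewrite S_eq.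
              destruct (Rlt_dec y a); [lra|].
              destruct (Rlt_dec y bb); [lra| reflexivity].
Qed.

Lemma largest_zero : exists s, 0 < s /\ S alpha XA XB s = 0 /\
  forall y, 0 < y -> S alpha XA XB y = 0 -> y <= s.
Proof.
  destruct a_facts as [Ha [Ha1 Hb1]]. assert (Hc := c_pos). assert (Hr := r_ge1).
  set (E := fun x => 0 < x /\ S alpha XA XB x <= 0).
  set (M := bb + r * c + 1).
  assert (HB : bound E).
  { exists M. intros x [Hx Sx]. destruct (Rle_dec x M) as [|Hn]; [assumption|].
    exfalso. rewrite S_eq in Sx. destruct (Rlt_dec x a); [unfold M in *; nra|].
    destruct (Rlt_dec x bb); [unfold M in *; nra|]. unfold p3, M in *. nra. }
  set (x1 := Rmin (r / c) (a / 2)).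
  assert (Hx1p : 0 < x1) by (apply Rmin_pos; [apply Rdiv_lt_0_compat|]; lra).
  assert (Hx1a : x1 <= a/2) by apply Rmin_r.
  assert (Hx1r : c * x1 <= r).
  { assert (x1 <= r / c) by apply Rmin_l.
    apply Rmult_le_compat_l with (r := c) in H; [|lra].
    replace (c * (r / c)) with r in H by (field; lra). exact H. }
  assert (HE : exists x, E x).
  { exists x1. split; [exact Hx1p|]. rewrite S_eq. destruct (Rlt_dec x1 a); [|lra].
    unfold p1. assert (0 <= x1^2) by nra. nra. }
  destruct (completeness E HB HE) as [s [Hub Hlub]].
  assert (Hs : 0 < s) by (assert (x1 <= s) by (apply Hub; split; [exact Hx1p|];
    rewrite S_eq; destruct (Rlt_dec x1 a); [|lra]; unfold p1; assert (0 <= x1^2) by nra; nra); lra).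
  exists s. split; [exact Hs|]. split.
  - destruct (Rtotal_order (S alpha XA XB s) 0) as [Hl|[He|Hg]]; [|exact He|].
    + exfalso. destruct (S_cont s Hs (- S alpha XA XB s)) as [d [Hd Hy]]; [lra|].
      assert (Es : E (s + d/2)).
      { split; [lra|]. assert (Rabs (s + d/2 - s) < d) by (rewrite Rabs_right; lra).
        apply Hy in H. apply Rabs_def2 in H. lra. }
      apply Hub in Es. lra.
    + exfalso. destruct (S_cont s Hs (S alpha XA XB s)) as [d [Hd Hy]]; [lra|].
      assert (s <= s - d/2); [|lra].
      apply Hlub. intros x [Hx Sx].
      destruct (Rle_dec x (s - d/2)) as [|Hn]; [assumption|exfalso].
      assert (x <= s) by (apply Hub; split; assumption).
      assert (Rabs (x - s) < d) by (apply Rabs_def1; lra).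
      apply Hy in H0. apply Rabs_def2 in H0. lra.
  - intros y Hy Sy. apply Hub. split; [exact Hy| lra].
Qed.

Let f2 y := 1 - alpha - alpha * y / 2 + alpha ^ 2 / (2 * y * (1 - alpha)).

Lemma f2_dec u t : 0 < u -> u <= t -> f2 t <= f2 u.
Proof.
  intros Hu Ht. unfold f2.
  assert (E : forall y, 0 < y -> alpha ^ 2 / (2 * y * (1 - alpha)) = alpha ^ 2 / (2 * (1 - alpha)) * / y)
    by (intros; field; lra).
  rewrite (E t), (E u) by lra.
  assert (/ t <= / u) by (apply Rinv_le_contravar; lra).
  assert (0 < alpha ^ 2 / (2 * (1 - alpha))) by (apply Rdiv_lt_0_compat; nra).
  nra.
Qed.

Lemma f2_a : f2 a = 1 - a / 2.
Proof. unfold f2, a. field. lra. Qed.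
Lemma f2_b : f2 bb = c / (2 * bb).
Proof. unfold f2, bb, c, cst. field. lra. Qed.
Lemma f2_b' : f2 bb = (1 - alpha) / 2 + alpha ^ 3 / (2 * (1 - alpha) ^ 2).
Proof. unfold f2, bb. field. lra. Qed.

Lemma piB_eq y : piB alpha y =
  if Rlt_dec y a then 1 - y / 2 else if Rlt_dec y bb then f2 y else c / (2 * y).
Proof. reflexivity. Qed.

Lemma f3_dec u t : 0 < u -> u <= t -> c / (2 * t) <= c / (2 * u).
Proof.
  intros. assert (Hc := c_pos). unfold Rdiv. apply Rmult_le_compat_l; [lra|].
  apply Rinv_le_contravar; lra.
Qed.

Lemma piB_dec u t : 0 < u -> u <= t -> piB alpha t <= piB alpha u.
Proof.
  intros Hu Ht. destruct a_facts as [Ha [Ha1 Hb1]].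
  rewrite !piB_eq.
  destruct (Rlt_dec t a); destruct (Rlt_dec u a); try lra.
  - destruct (Rlt_dec t bb).
    + assert (f2 t <= f2 a) by (apply f2_dec; lra). rewrite f2_a in H. lra.
    + assert (c / (2 * t) <= c / (2 * bb)) by (apply f3_dec; lra).
      assert (f2 bb <= f2 a) by (apply f2_dec; lra). rewrite f2_a, f2_b in H0. lra.
  - destruct (Rlt_dec t bb); destruct (Rlt_dec u bb); try lra.
    + apply f2_dec; lra.
    + assert (c / (2 * t) <= c / (2 * bb)) by (apply f3_dec; lra).
      assert (f2 bb <= f2 u) by (apply f2_dec; lra). rewrite f2_b in H0. lra.
    + apply f3_dec; lra.
Qed.

Lemma piB_lower y : 0 < y -> S alpha XA XB y = 0 -> (1 - alpha) * (XB / XA) / 2 < piB alpha y.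
Proof.
  intros Hy Sy. destruct a_facts as [Ha [Ha1 Hb1]]. assert (Hc := c_pos).
  assert (Hq : 0 < XB / XA <= 1).
  { split; [apply Rdiv_lt_0_compat; lra|].
    apply Rmult_le_reg_r with XA; [lra|]. field_simplify; lra. }
  rewrite piB_eq. rewrite S_eq in Sy.
  destruct (Rlt_dec y a). { nra. }
  destruct (Rlt_dec y bb).
  - assert (f2 bb <= f2 y) by (apply f2_dec; lra). rewrite f2_b' in H.
    assert (0 < alpha ^ 3 / (2 * (1 - alpha) ^ 2)) by (apply Rdiv_lt_0_compat; [apply pow_lt; lra| apply Rmult_lt_0_compat; [lra| apply pow_lt; lra]]).
    assert (0 <= (1 - alpha) * (1 - XB / XA)) by (apply Rmult_le_pos; lra).
    nra.
  - unfold p3 in Sy. assert (y = r * c) by lra. subst y.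
    replace (c / (2 * (r * c))) with (XB / XA / 2).
    + nra.
    + unfold r. field. repeat split; lra.
Qed.

Lemma L_bounds x y : 0 <= x -> 0 <= y -> 0 <= L x y <= 1.
Proof.
  intros Hx Hy. unfold L. destruct (Rle_dec x y).
  - destruct (Rlt_dec 0 y); [|lra]. split.
    + apply Rmult_le_pos; [lra| left; apply Rinv_0_lt_compat; lra].
    + apply Rmult_le_reg_r with (2 * y); [lra|]. field_simplify; lra.
  - assert (0 <= y / (2 * x) <= 1); [|lra]. split.
    + apply Rmult_le_pos; [lra| left; apply Rinv_0_lt_compat; lra].
    + apply Rmult_le_reg_r with (2 * x); [lra|]. field_simplify; lra.
Qed.

Lemma uB_upper p : 0 <= p <= XB -> uB alpha XA XB bf2 p <= (1 - alpha) * (XB / XA) / 2.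
Proof.
  intros Hp. unfold uB.
  assert (HM : respA_M alpha XA XB bf2 p = true).
  { unfold respA_M. destruct (Rle_dec p XA); [|lra].
    destruct (Rlt_dec (uA_W alpha XA XB bf2 p) (uA_M alpha XA XB bf2 p)); [reflexivity|].
    exfalso. apply n. unfold uA_W, uA_M; simpl.
    assert (H1 := L_bounds XA (XB - p) ltac:(lra) ltac:(lra)).
    assert (H2 := L_bounds (XA - p) (XB - p) ltac:(lra) ltac:(lra)).
    nra. }
  rewrite HM. simpl.
  assert (L (XB - p) (XA - p) <= XB / XA / 2); [|nra].
  unfold L. destruct (Rle_dec (XB - p) (XA - p)); [|lra].
  destruct (Rlt_dec 0 (XA - p)).
  - apply Rmult_le_reg_r with (2 * XA * (XA - p)); [nra|]. field_simplify; [nra|lra|lra].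
  - replace XA with XB by lra. replace p with XB by lra. right; field; lra.
Qed.

End Sx.

Theorem lemma3 (alpha XA XB p : R) :
  0 < alpha < 1 / 2 -> 0 < XB <= XA -> 0 <= p <= XB ->
  exists sigma0 : R,
    0 < sigma0 /\ S alpha XA XB sigma0 = 0 /\
    (forall sigma, 0 < sigma -> S alpha XA XB sigma = 0 ->
       piB alpha sigma0 <= piB alpha sigma) /\
    uB alpha XA XB bf2 p < piB alpha sigma0.
Proof.
  intros Hal HX Hp.
  destruct (largest_zero alpha XA XB Hal HX) as [s [Hs [Ss Hmax]]].
  exists s. split; [exact Hs|]. split; [exact Ss|]. split.
  - intros y Hy Sy. apply (piB_dec alpha Hal); [exact Hy| apply Hmax; assumption].
  - eapply Rle_lt_trans; [apply (uB_upper alpha XA XB Hal HX p Hp)|].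
    apply (piB_lower alpha XA XB Hal HX s Hs Ss).
Qed.
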